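(* Let $d_1,d_2\ge2$ and let $\rho_{12}$ be a (possibly mixed) density operator on $\mathbb{C}^{d_1}\otimes\mathbb{C}^{d_2}$. Write $t_{u_1,u_2}=\operatorname{tr}\big(\rho_{12}\,(A^{(1)}_{u_1})^{\dagger}\otimes(A^{(2)}_{u_2})^{\dagger}\big)$ for $0\le u_s\le d_s^2-1$, so that $\rho_{12}=\frac{1}{d_1d_2}\sum_{u_1,u_2}t_{u_1,u_2}A^{(1)}_{u_1}\otimes A^{(2)}_{u_2}$, and let $T^{(12)}$ be the vector with entries $t_{u_1,u_2}$ for $u_1\ne0$, $u_2\ne0$. Then $$\|T^{(12)}\|^2\le d_1d_2\Big(1-\frac{1}{d_1^2}-\frac{1}{d_2^2}\Big)+1.$$
   Context: Generalized Pauli operators: for an integer $d\ge2$, let $\omega$ be a fixed primitive $d$-th root of unity and let $E_{m,j}$ ($0\le m,j\le d-1$) be the $d\times d$ matrix units, with indices taken modulo $d$. Each $u\in\{0,\dots,d^2-1\}$ is written uniquely as $u=di+j$ with $0\le i,j\le d-1$, and one sets $A_u=A_{di+j}=\sum_{m=0}^{d-1}\omega^{im}E_{m,m+j}$. Thus $A_0=I_d$ and $\operatorname{tr}(A_uA_v^{\dagger})=d\,\delta_{uv}$. $A^{(s)}_u$ denotes these operators for $d=d_s$. For a complex vector $v$, $\|v\|=\sqrt{v^{\dagger}v}$. *)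

(* Defs.v *)
From HB Require Import structures.
From mathcomp Require Import all_boot all_order all_algebra.
From mathcomp Require Export complex mxtens.
Set Implicit Arguments.
Unset Strict Implicit.
Unset Printing Implicit Defensive.
Import Order.TTheory GRing.Theory Num.Theory.
Local Open Scope ring_scope.

Definition adjmx {C : numClosedFieldType} {m n : nat} (A : 'M[C]_(m, n)) : 'M[C]_(n, m) :=
  (map_mx Num.conj A)^T.

(* Generalized Pauli operator A_u, u = d*i + j, i = u %/ d, j = u %% d:
   A_{di+j} = sum_m omega^(i m) E_{m, m+j} (indices mod d). *)
Definition gpauli {C : numClosedFieldType} (d : nat) (omega : C) (u : nat) : 'M[C]_d :=
  \matrix_(m < d, n < d)
     (if ((n : nat) == ((m : nat) + u %% d) %% d)%N then omega ^+ ((u %/ d) * m)%N else 0).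

Definition density_op {C : numClosedFieldType} {n : nat} (rho : 'M[C]_n) : Prop :=
  [/\ adjmx rho = rho,
      (forall v : 'cV[C]_n, 0 <= ((adjmx v) *m rho *m v) 0 0)
    & \tr rho = 1].

Definition tcoef {C : numClosedFieldType} (d1 d2 : nat) (w1 w2 : C)
  (rho : 'M[C]_(d1 * d2)) (u1 u2 : nat) : C :=
  \tr (rho *m (adjmx (gpauli d1 w1 u1) *t adjmx (gpauli d2 w2 u2))).
Arguments tcoef {C} d1 d2 w1 w2 rho u1 u2.
Arguments gpauli {C} d omega u.

(* Main.v *)
Require Import Defs.
From HB Require Import structures.
From mathcomp Require Import all_boot all_order all_algebra.
From mathcomp Require Import complex mxtens.
From mathcomp Require Import sesquilinear spectral.
From mathcomp Require Import zify ring.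
Set Implicit Arguments.
Unset Strict Implicit.
Unset Printing Implicit Defensive.
Import Order.TTheory GRing.Theory Num.Theory.
Local Open Scope ring_scope.


Section Roots.
Variable C : numClosedFieldType.

Lemma prim_conj (d : nat) (w : C) : (0 < d)%N -> d.-primitive_root w ->
  w^* = w ^+ d.-1.
Proof.
move=> d0 pw.
have wd : w ^+ d = 1 := prim_expr_order pw.
have nw : `|w| = 1.
  apply/eqP; rewrite -(pexpr_eq1 d0) ?normr_ge0 //.
  by rewrite -normrX wd normr1.
have w0 : w != 0.
  by apply/eqP => w0; move: nw; rewrite w0 normr0 => /eqP; rewrite eq_sym oner_eq0.
apply: (mulfI w0).
by rewrite -normCK nw expr1n -exprS prednK.
Qed.

Lemma geom_root (d : nat) (w : C) (k : nat) : (0 < d)%N -> d.-primitive_root w ->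
  \sum_(i < d) (w ^+ k) ^+ i = if (d %| k)%N then d%:R else 0.
Proof.
move=> d0 pw.
case: ifP => dk.
  have -> : w ^+ k = 1 by apply/eqP; rewrite -(prim_order_dvd pw).
  by rewrite (eq_bigr (fun _ => 1)) ?sumr_const ?card_ord // => i _; rewrite expr1n.
have z1 : w ^+ k != 1 by rewrite -(prim_order_dvd pw) dk.
have : (w ^+ k) ^+ d - 1 = 0.
  by rewrite -exprM mulnC exprM (prim_expr_order pw) expr1n subrr.
rewrite subrX1 => /eqP; rewrite mulf_eq0 subr_eq0 (negbTE z1) /= => /eqP //.
Qed.

Lemma parseval1 (d : nat) (w : C) (y : 'I_d -> C) : (0 < d)%N -> d.-primitive_root w ->
  \sum_(i < d) `| \sum_(a < d) y a * w^* ^+ (i * a) | ^+ 2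
  = d%:R * \sum_(a < d) `|y a| ^+ 2.
Proof.
move=> d0 pw.
have cw := prim_conj d0 pw.
transitivity (\sum_(a < d) \sum_(b < d) y a * (y b)^* *
                \sum_(i < d) (w ^+ (d.-1 * a + b)) ^+ i).
  rewrite (eq_bigr (fun i : 'I_d => \sum_(a < d) \sum_(b < d)
        y a * (y b)^* * (w ^+ (d.-1 * a + b)) ^+ i)); last first.
    move=> i _; rewrite normCK rmorph_sum mulr_suml; apply: eq_bigr => a _.
    rewrite mulr_sumr; apply: eq_bigr => b _.
    rewrite rmorphM /= rmorphXn /= conjCK cw -!exprM.
    have -> : ((d.-1 * a + b) * i = d.-1 * (i * a) + i * b)%N.
      by rewrite mulnDl mulnC [(b * i)%N]mulnC mulnA [(i * d.-1)%N]mulnC -mulnA.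
    rewrite exprD.
    by rewrite -!mulrA; congr (_ * _); rewrite mulrCA.
  rewrite exchange_big; apply: eq_bigr => a _.
  rewrite exchange_big; apply: eq_bigr => b _.
  by rewrite mulr_sumr.
rewrite mulr_sumr; apply: eq_bigr => a _.
under eq_bigr => b _ do rewrite geom_root //.
rewrite (bigD1 a) //= big1 ?addr0.
  have -> : (d %| d.-1 * a + a)%N.
    by rewrite -{2}[a:nat]mul1n -mulnDl addn1 prednK // dvdn_mulr.
  by rewrite normCK mulrC.
move=> b nba.
case: ifP => dv; last by rewrite mulr0.
exfalso.
have ha := ltn_ord a; have hb := ltn_ord b.
move: dv; rewrite /dvdn => /eqP dv.
have : ((d.-1 * a + b + a) %% d = a %% d)%N by rewrite -modnDml dv add0n.
have -> : (d.-1 * a + b + a = d * a + b)%N.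
  by rewrite -addnA [(b + a)%N]addnC addnA -{2}[a:nat]mul1n -mulnDl addn1 prednK // mulnC.
rewrite mulnC modnMDl !modn_small // => eab.
by move: nba; rewrite -(inj_eq val_inj) /= eab eqxx.
Qed.

End Roots.
Section Formula.
Variable C : numClosedFieldType.

Lemma ord_pos d (a : 'I_d) : (0 < d)%N.
Proof. exact: leq_ltn_trans (leq0n a) (ltn_ord a). Qed.

Definition shift d (j : nat) (a : 'I_d) : 'I_d :=
  Ordinal (ltn_pmod (a + j) (ord_pos a)).

Lemma sum_tens d1 d2 (F : 'I_(d1 * d2) -> C) :
  \sum_x F x = \sum_(a1 < d1) \sum_(a2 < d2) F (mxtens_index (a1, a2)).
Proof.
rewrite pair_big /= (reindex (@mxtens_index d1 d2)) /=; last first.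
  by exists (@mxtens_unindex d1 d2) => x _; rewrite (mxtens_indexK, mxtens_unindexK).
by apply: eq_bigr => -[a1 a2].
Qed.

Lemma sum_shift d (j : nat) (a : 'I_d) (F : 'I_d -> C) :
  \sum_(b < d) (if (b : nat) == ((a + j) %% d)%N then F b else 0) = F (shift j a).
Proof.
rewrite (bigD1 (shift j a)) //= eqxx big1 ?addr0 // => b nb.
case: ifP => // /eqP e; exfalso; move: nb; rewrite -(inj_eq val_inj) /= e eqxx //.
Qed.

Lemma adjmxE m n (A : 'M[C]_(m, n)) i j : adjmx A i j = (A j i)^*.
Proof. by rewrite /adjmx !mxE. Qed.

Lemma tcoefE d1 d2 (w1 w2 : C) (X : 'M[C]_(d1 * d2)) (u1 u2 : nat) :
  tcoef d1 d2 w1 w2 X u1 u2 =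
  \sum_(a1 < d1) \sum_(a2 < d2)
     X (mxtens_index (a1, a2)) (mxtens_index (shift (u1 %% d1) a1, shift (u2 %% d2) a2))
     * (w1^* ^+ (u1 %/ d1 * a1)) * (w2^* ^+ (u2 %/ d2 * a2)).
Proof.
rewrite /tcoef /mxtrace sum_tens; apply: eq_bigr => a1 _; apply: eq_bigr => a2 _.
rewrite mxE sum_tens.
rewrite (eq_bigr (fun b1 : 'I_d1 => if (b1 : nat) == ((a1 + u1 %% d1) %% d1)%N then
   \sum_(b2 < d2) X (mxtens_index (a1, a2)) (mxtens_index (b1, b2)) *
    ((w1^* ^+ (u1 %/ d1 * a1)) * (gpauli d2 w2 u2 a2 b2)^*) else 0)); last first.
  move=> b1 _; case: ifP => e.
    apply: eq_bigr => b2 _; rewrite tensmxE !adjmxE !mxE e.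
    by rewrite rmorphXn /= mulrA.
  rewrite big1 // => b2 _; rewrite tensmxE !adjmxE !mxE e.
  by rewrite rmorph0 mul0r mulr0.
rewrite sum_shift.
rewrite (eq_bigr (fun b2 : 'I_d2 => if (b2 : nat) == ((a2 + u2 %% d2) %% d2)%N then
   X (mxtens_index (a1, a2)) (mxtens_index (shift (u1 %% d1) a1, b2)) *
    ((w1^* ^+ (u1 %/ d1 * a1)) * (w2^* ^+ (u2 %/ d2 * a2))) else 0)); last first.
  move=> b2 _; rewrite !mxE; case: ifP => e.
    by rewrite rmorphXn.
  by rewrite rmorph0 !mulr0.
by rewrite sum_shift mulrA.
Qed.

End Formula.
Section Jensen.
Variable C : numClosedFieldType.

Lemma jensen n (lam x : 'I_n -> C) : (forall k, 0 <= lam k) -> \sum_k lam k = 1 ->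
  `|\sum_k lam k * x k| ^+ 2 <= \sum_k lam k * `|x k| ^+ 2.
Proof.
move=> l0 l1.
set m := \sum_k lam k * x k.
have H : 0 <= \sum_k lam k * `|x k - m| ^+ 2.
  by apply: sumr_ge0 => k _; apply: mulr_ge0 => //; apply: exprn_ge0.
have e : forall k, lam k * `|x k - m| ^+ 2 =
   lam k * `|x k| ^+ 2 - (lam k * x k) * m^* - m * (lam k * x k)^* + lam k * (m * m^*).
  move=> k; rewrite !normCK rmorphB rmorphM /= (geC0_conj (l0 k)); ring.
rewrite (eq_bigr _ (fun k _ => e k)) in H.
rewrite big_split /= sumrB sumrB -!mulr_suml -mulr_sumr -rmorph_sum -/m l1 mul1r in H.
by rewrite -subr_ge0 normCK; move: H; congr (0 <= _); ring.
Qed.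

End Jensen.

Section Sums.
Variable C : numClosedFieldType.

Lemma shift0 d (a : 'I_d) : shift 0 a = a.
Proof. by apply: val_inj => /=; rewrite addn0 modn_small. Qed.

Lemma sum_shift_re d (a : 'I_d) (F : 'I_d -> C) :
  \sum_(j < d) F (shift j a) = \sum_(b < d) F b.
Proof.
symmetry; apply: (reindex_inj (h := fun j : 'I_d => shift j a)).
move=> j k /(congr1 val) /= /eqP; rewrite eqn_modDl !modn_small // => /eqP e.
exact: val_inj.
Qed.

Lemma sum_u d (G : nat -> nat -> C) : (0 < d)%N ->
  \sum_(u < d ^ 2) G (u %/ d)%N (u %% d)%N = \sum_(i < d) \sum_(j < d) G i j.
Proof.
move=> d0.
have := sum_tens (fun u : 'I_(d * d) => G (u %/ d)%N (u %% d)%N).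
move=> ->; apply: eq_bigr => i _; apply: eq_bigr => j _ /=.
by rewrite divnMDl // modnMDl divn_small // modn_small // addn0.
Qed.

Lemma sum_nz n (F : 'I_n -> C) (h : (0 < n)%N) :
  \sum_(u < n | u != 0%N :> nat) F u = \sum_(u < n) F u - F (Ordinal h).
Proof.
rewrite [in RHS](bigD1 (Ordinal h)) //= addrAC subrr add0r.
by apply: eq_bigl => u; rewrite -(inj_eq val_inj).
Qed.

End Sums.


Section Pars.
Variable C : numClosedFieldType.

Lemma parseval2 d1 d2 (w1 w2 : C) (z : 'I_d1 -> 'I_d2 -> C) :
  (0 < d1)%N -> (0 < d2)%N -> d1.-primitive_root w1 -> d2.-primitive_root w2 ->
  \sum_(i1 < d1) \sum_(i2 < d2)
     `|\sum_(a1 < d1) \sum_(a2 < d2) z a1 a2 * w1^* ^+ (i1 * a1) * w2^* ^+ (i2 * a2)| ^+ 2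
  = (d1 * d2)%:R * \sum_(a1 < d1) \sum_(a2 < d2) `|z a1 a2| ^+ 2.
Proof.
move=> d10 d20 p1 p2.
rewrite exchange_big /=.
under eq_bigr => i2 _.
  under eq_bigr => i1 _.
    rewrite (eq_bigr (fun a1 => (\sum_(a2 < d2) z a1 a2 * w2^* ^+ (i2 * a2)) * w1^* ^+ (i1 * a1))); last first.
      by move=> a1 _; rewrite mulr_suml; apply: eq_bigr => a2 _; rewrite mulrAC.
    over.
  rewrite (parseval1 (fun a1 => \sum_(a2 < d2) z a1 a2 * w2^* ^+ (i2 * a2))) //.
  over.
rewrite -mulr_sumr exchange_big /= natrM -mulrA; congr (_ * _); rewrite mulr_sumr.
apply: eq_bigr => a1 _; exact: parseval1.
Qed.

Lemma parseval_shift d (w : C) (Y : 'I_d -> 'I_d -> C) :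
  (0 < d)%N -> d.-primitive_root w ->
  \sum_(u < d ^ 2) `|\sum_(a < d) Y a (shift (u %% d) a) * w^* ^+ (u %/ d * a)| ^+ 2
  = d%:R * \sum_(a < d) \sum_(b < d) `|Y a b| ^+ 2.
Proof.
move=> d0 pw.
rewrite (sum_u (fun i j => `|\sum_(a < d) Y a (shift j a) * w^* ^+ (i * a)| ^+ 2)) //.
rewrite exchange_big /=.
under eq_bigr => j _ do rewrite (parseval1 (fun a => Y a (shift j a))) //.
rewrite -mulr_sumr exchange_big /=; congr (_ * _).
by apply: eq_bigr => a _; rewrite (sum_shift_re a (fun b => `|Y a b| ^+ 2)).
Qed.

End Pars.


Section LB.
Variable C : numClosedFieldType.

Lemma lb n (Y : 'I_n -> 'I_n -> C) : (0 < n)%N -> \sum_a Y a a = 1 ->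
  n%:R^-1 <= \sum_a \sum_b `|Y a b| ^+ 2.
Proof.
move=> n0 tr1.
have nz : n%:R != 0 :> C by rewrite pnatr_eq0 -lt0n.
have ip : 0 < n%:R^-1 :> C by rewrite invr_gt0 ltr0n.
apply: (@le_trans _ _ (\sum_a `|Y a a| ^+ 2)).
  have := @jensen C n (fun _ => n%:R^-1) (fun a => Y a a).
  have H : \sum_(i < n) n%:R^-1 = 1 :> C.
    by rewrite sumr_const card_ord -[_ *+ n]mulr_natr mulVf.
  move=> /(_ (fun _ => ltW ip) H).
  rewrite -mulr_sumr -mulr_sumr tr1 mulr1.
  rewrite ger0_norm ?(ltW ip) // expr2 ler_pM2l //.
apply: ler_sum => a _; rewrite (bigD1 a) //= lerDl.
by apply: sumr_ge0 => b _; apply: exprn_ge0.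
Qed.

End LB.


Section Pure.
Variable C : numClosedFieldType.
Variables (d1 d2 : nat) (w1 w2 : C).
Hypotheses (d10 : (0 < d1)%N) (d20 : (0 < d2)%N).
Hypotheses (p1 : d1.-primitive_root w1) (p2 : d2.-primitive_root w2).
Variable v : 'cV[C]_(d1 * d2).
Hypothesis vn : \sum_i `|v i 0| ^+ 2 = 1.

Let M a1 a2 := v (mxtens_index (a1, a2)) 0.
Let X := v *m adjmx v.
Let t u1 u2 := tcoef d1 d2 w1 w2 X u1 u2.

Lemma tpure u1 u2 : t u1 u2 =
  \sum_(a1 < d1) \sum_(a2 < d2)
     M a1 a2 * (M (shift (u1 %% d1) a1) (shift (u2 %% d2) a2))^*
     * (w1^* ^+ (u1 %/ d1 * a1)) * (w2^* ^+ (u2 %/ d2 * a2)).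
Proof.
rewrite /t tcoefE; apply: eq_bigr => a1 _; apply: eq_bigr => a2 _.
by rewrite /X !mxE big_ord1 adjmxE.
Qed.

Lemma Mn : \sum_(a1 < d1) \sum_(a2 < d2) `|M a1 a2| ^+ 2 = 1.
Proof. by rewrite -vn sum_tens. Qed.

Definition Y1 (a b : 'I_d1) := \sum_(a2 < d2) M a a2 * (M b a2)^*.
Definition Y2 (a b : 'I_d2) := \sum_(a1 < d1) M a1 a * (M a1 b)^*.

Lemma S_all : \sum_(u1 < d1 ^ 2) \sum_(u2 < d2 ^ 2) `|t u1 u2| ^+ 2 = (d1 * d2)%:R.
Proof.
under eq_bigr => u1 _.
  under eq_bigr => u2 _ do rewrite tpure.
  rewrite (sum_u (fun i2 j2 => `|\sum_(a1 < d1) \sum_(a2 < d2)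
     M a1 a2 * (M (shift (u1 %% d1) a1) (shift j2 a2))^*
     * (w1^* ^+ (u1 %/ d1 * a1)) * (w2^* ^+ (i2 * a2))| ^+ 2)) //.
  over.
rewrite (sum_u (fun i1 j1 => \sum_(i2 < d2) \sum_(j2 < d2) `|\sum_(a1 < d1) \sum_(a2 < d2)
     M a1 a2 * (M (shift j1 a1) (shift j2 a2))^*
     * (w1^* ^+ (i1 * a1)) * (w2^* ^+ (i2 * a2))| ^+ 2)) //.
rewrite exchange_big /=.
under eq_bigr => j1 _.
  under eq_bigr => i1 _ do rewrite exchange_big /=.
  rewrite exchange_big /=.
  under eq_bigr => j2 _ do rewrite (parseval2 (fun a1 a2 => M a1 a2 * (M (shift j1 a1) (shift j2 a2))^*)) //.
  over.
rewrite /=.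
under eq_bigr => j1 _ do rewrite -mulr_sumr.
rewrite -mulr_sumr -[RHS]mulr1; congr (_ * _).
transitivity (\sum_(a1 < d1) \sum_(a2 < d2) `|M a1 a2| ^+ 2 *
    \sum_(b1 < d1) \sum_(b2 < d2) `|M b1 b2| ^+ 2); last first.
  rewrite Mn; under eq_bigr => a1 _ do under eq_bigr => a2 _ do rewrite mulr1.
  exact: Mn.
under eq_bigr => j1 _ do rewrite exchange_big /=.
under eq_bigr => j1 _ do under eq_bigr => a1 _ do rewrite exchange_big /=.
rewrite exchange_big /=; apply: eq_bigr => a1 _.
rewrite exchange_big /=; apply: eq_bigr => a2 _.
rewrite [RHS]mulr_sumr -[RHS](sum_shift_re a1); apply: eq_bigr => j1 _.
rewrite [RHS]mulr_sumr -[RHS](sum_shift_re a2); apply: eq_bigr => j2 _.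
by rewrite normrM exprMn norm_conjC.
Qed.

Lemma S10 : \sum_(u1 < d1 ^ 2) `|t u1 0| ^+ 2 =
  d1%:R * \sum_(a < d1) \sum_(b < d1) `|Y1 a b| ^+ 2.
Proof.
have E : forall u1 : nat, t u1 0 =
    \sum_(a1 < d1) Y1 a1 (shift (u1 %% d1) a1) * w1^* ^+ (u1 %/ d1 * a1).
  move=> u1; rewrite tpure; apply: eq_bigr => a1 _; rewrite /Y1 mulr_suml.
  by apply: eq_bigr => a2 _; rewrite mod0n div0n shift0 mul0n expr0 mulr1.
under eq_bigr => u _ do rewrite E.
exact: parseval_shift.
Qed.

Lemma S01 : \sum_(u2 < d2 ^ 2) `|t 0 u2| ^+ 2 =
  d2%:R * \sum_(a < d2) \sum_(b < d2) `|Y2 a b| ^+ 2.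
Proof.
have E : forall u2 : nat, t 0 u2 =
    \sum_(a2 < d2) Y2 a2 (shift (u2 %% d2) a2) * w2^* ^+ (u2 %/ d2 * a2).
  move=> u2; rewrite tpure exchange_big /=; apply: eq_bigr => a2 _; rewrite /Y2 mulr_suml.
  by apply: eq_bigr => a1 _; rewrite mod0n div0n shift0 mul0n expr0 mulr1.
under eq_bigr => u _ do rewrite E.
exact: parseval_shift.
Qed.

Lemma t00 : t 0 0 = 1.
Proof.
rewrite tpure -Mn; apply: eq_bigr => a1 _; apply: eq_bigr => a2 _.
by rewrite !mod0n !div0n !shift0 !mul0n !expr0 !mulr1 normCK.
Qed.

Lemma Peq : \sum_(a < d1) \sum_(b < d1) `|Y1 a b| ^+ 2 =
            \sum_(a < d2) \sum_(b < d2) `|Y2 a b| ^+ 2.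
Proof.
pose F (a b : 'I_d1) (x y : 'I_d2) := M a x * (M b x)^* * ((M a y)^* * M b y).
have e1 : forall a b, `|Y1 a b| ^+ 2 = \sum_x \sum_y F a b x y.
  move=> a b; rewrite normCK /Y1 rmorph_sum mulr_suml; apply: eq_bigr => x _.
  by rewrite mulr_sumr; apply: eq_bigr => y _; rewrite rmorphM /= conjCK.
have e2 : forall x y, `|Y2 x y| ^+ 2 = \sum_a \sum_b F a b x y.
  move=> x y; rewrite normCK /Y2 rmorph_sum mulr_suml; apply: eq_bigr => a _.
  rewrite mulr_sumr; apply: eq_bigr => b _; rewrite rmorphM /= conjCK /F; ring.
under eq_bigr => a _ do under eq_bigr => b _ do rewrite e1.
under [RHS]eq_bigr => x _ do under eq_bigr => y _ do rewrite e2.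
under eq_bigr => a _ do rewrite exchange_big /=.
rewrite exchange_big /=; apply: eq_bigr => x _.
under eq_bigr => a _ do rewrite exchange_big /=.
by rewrite exchange_big.
Qed.

Lemma pure_bound :
  \sum_(u1 < d1 ^ 2 | u1 != 0%N :> nat) \sum_(u2 < d2 ^ 2 | u2 != 0%N :> nat)
      `|t u1 u2| ^+ 2
    <= (d1 * d2)%:R * (1 - 1 / (d1 ^ 2)%:R - 1 / (d2 ^ 2)%:R) + 1.
Proof.
have h1 : (0 < d1 ^ 2)%N by rewrite expn_gt0 d10.
have h2 : (0 < d2 ^ 2)%N by rewrite expn_gt0 d20.
under eq_bigr => u1 _ do rewrite (sum_nz _ h2).
rewrite sumrB !(sum_nz _ h1) /=.
rewrite S_all S10 S01 t00 normr1 expr1n Peq.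
set P := \sum_(a < d2) \sum_(b < d2) `|Y2 a b| ^+ 2.
have L1 : d1%:R^-1 <= P.
  rewrite /P -Peq; apply: lb => //.
  by rewrite -Mn; apply: eq_bigr => a _; apply: eq_bigr => b _; rewrite normCK.
have L2 : d2%:R^-1 <= P.
  apply: lb => //.
  rewrite -Mn exchange_big /=; apply: eq_bigr => a _; apply: eq_bigr => b _.
  by rewrite normCK.
have n1 : d1%:R != 0 :> C by rewrite pnatr_eq0 -lt0n.
have n2 : d2%:R != 0 :> C by rewrite pnatr_eq0 -lt0n.
have -> : (d1 * d2)%:R * (1 - 1 / (d1 ^ 2)%:R - 1 / (d2 ^ 2)%:R) + 1 =
   (d1 * d2)%:R - d2%:R * d1%:R^-1 - (d1%:R * d2%:R^-1 - 1) :> C.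
  by rewrite natrM !natrX; field; rewrite n1 n2.
apply: (@lerB C); first apply: (@lerB C) => //.
  by apply: ler_wpM2l => //; apply: ler0n.
by apply: (@lerB C) => //; apply: ler_wpM2l => //; apply: ler0n.
Qed.

End Pure.


Section Spec.
Variable C : numClosedFieldType.

Lemma spectral_decomp n (rho : 'M[C]_n) : density_op rho ->
  exists (lam : 'I_n -> C) (v : 'I_n -> 'cV[C]_n),
  [/\ forall k, 0 <= lam k, \sum_k lam k = 1,
      forall k, \sum_i `|v k i 0| ^+ 2 = 1
    & rho = \sum_k lam k *: (v k *m adjmx (v k))].
Proof.
case=> herm psd tr1.
have hs : rho \is hermsymmx.
  rewrite is_hermitianmxE expr0 scale1r; apply/eqP.
  by rewrite -{1}herm /adjmx map_trmx.
have /orthomx_spectralP rhoE := hermitian_normalmx hs.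
set P := spectralmx rho in rhoE.
set D := spectral_diag rho in rhoE.
have Pu : P \is unitarymx := spectral_unitarymx rho.
have orth : forall k l, \sum_i P k i * (P l i)^* = (k == l)%:R.
  move=> k l; move/unitarymxP: Pu => /matrixP /(_ k l).
  by rewrite !mxE => <-; apply: eq_bigr => i _; rewrite !mxE.
rewrite invmx_unitary // in rhoE.
pose v k : 'cV[C]_n := \col_i (P k i)^*.
have rhoij : forall i j, rho i j = \sum_k D 0 k * ((P k i)^* * P k j).
  move=> i j; rewrite rhoE !mxE; apply: eq_bigr => k _.
  rewrite !mxE (bigD1 k) //= big1 ?addr0; last first.
    by move=> l nl; rewrite !mxE (negbTE nl) mulr0n mulr0.
  by rewrite !mxE eqxx mulr1n; ring.
have decomp : rho = \sum_k D 0 k *: (v k *m adjmx (v k)).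
  apply/matrixP => i j; rewrite rhoij summxE; apply: eq_bigr => k _.
  rewrite !mxE big_ord1 !mxE conjCK //.
have ip : forall k l, adjmx (v k) *m v l = ((k == l)%:R)%:M.
  move=> k l; apply/matrixP => a b; rewrite !ord1 !mxE eqxx mulr1n -orth.
  by apply: eq_bigr => i _; rewrite !mxE conjCK.
have quad : forall k l, adjmx (v k) *m (v l *m adjmx (v l)) *m v k = ((k == l)%:R)%:M.
  move=> k l; rewrite mulmxA -mulmxA !ip mul_scalar_mx scale_scalar_mx.
  by rewrite eq_sym; case: (l == k); rewrite ?mulr1 ?mulr0.
exists (fun k => D 0 k), v; split => //.
- move=> k; have := psd (v k).
  suff -> : (adjmx (v k) *m rho *m v k) 0 0 = D 0 k by [].
  rewrite decomp mulmx_sumr mulmx_suml summxE (bigD1 k) //= big1 ?addr0.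
    by rewrite -scalemxAr -scalemxAl mxE quad eqxx mxE mulr1.
  by move=> l nl; rewrite -scalemxAr -scalemxAl mxE quad eq_sym (negbTE nl) mxE mulr0.
- rewrite -tr1 decomp raddf_sum /=; apply: eq_bigr => k _.
  rewrite mxtraceZ mxtrace_mulC ip /mxtrace big_ord1 !mxE eqxx mulr1 //.
- move=> k; transitivity ((k == k)%:R : C); last by rewrite eqxx.
  rewrite -orth.
  by apply: eq_bigr => i _; rewrite !mxE normCK mulrC conjCK.
Qed.

End Spec.


Lemma tcoef_lin (C : numClosedFieldType) d1 d2 (w1 w2 : C) n (lam : 'I_n -> C)
  (V : 'I_n -> 'M[C]_(d1 * d2)) u1 u2 :
  tcoef d1 d2 w1 w2 (\sum_k lam k *: V k) u1 u2 = \sum_k lam k * tcoef d1 d2 w1 w2 (V k) u1 u2.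
Proof.
rewrite /tcoef mulmx_suml raddf_sum /=; apply: eq_bigr => k _.
by rewrite -scalemxAl mxtraceZ.
Qed.

Theorem lemma2 (R : rcfType) (d1 d2 : nat) (w1 w2 : R[i])
  (rho : 'M[R[i]]_(d1 * d2)) :
  (2 <= d1)%N -> (2 <= d2)%N ->
  d1.-primitive_root w1 -> d2.-primitive_root w2 ->
  density_op rho ->
  \sum_(u1 < d1 ^ 2 | u1 != 0%N :> nat) \sum_(u2 < d2 ^ 2 | u2 != 0%N :> nat)
      `|tcoef d1 d2 w1 w2 rho u1 u2| ^+ 2
    <= (d1 * d2)%:R * (1 - 1 / (d1 ^ 2)%:R - 1 / (d2 ^ 2)%:R) + 1.
Proof.
move=> h1 h2 p1 p2 dens.
have d10 : (0 < d1)%N by apply: leq_trans h1.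
have d20 : (0 < d2)%N by apply: leq_trans h2.
have [lam [v [l0 l1 vn ->]]] := spectral_decomp dens.
set B := _ + 1.
apply: (@le_trans _ _ (\sum_(u1 < d1 ^ 2 | u1 != 0%N :> nat) \sum_(u2 < d2 ^ 2 | u2 != 0%N :> nat)
   \sum_k lam k * `|tcoef d1 d2 w1 w2 (v k *m adjmx (v k)) u1 u2| ^+ 2)).
  apply: ler_sum => u1 _; apply: ler_sum => u2 _.
  by rewrite tcoef_lin; apply: jensen.
under eq_bigr => u1 _ do rewrite exchange_big /=.
rewrite exchange_big /=.
apply: (@le_trans _ _ (\sum_k lam k * B)); last first.
  by rewrite -mulr_suml l1 mul1r.
apply: ler_sum => k _.
under eq_bigr => u1 _ do rewrite -mulr_sumr.
rewrite -mulr_sumr; apply: ler_wpM2l => //.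
exact: pure_bound.
Qed.
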